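(* Let $\mathbf{A}$ be a strictly simple algebra and let $e$ be a minimal idempotent of $\mathbf{A}$. Then $e$ is separating and dense for $\mathbf{A}$, and the localization $e(\mathbf{A})$ is a term minimal strictly simple algebra.
   Context: An algebra is strictly simple if it is finite, simple, and has no nontrivial proper subalgebras (i.e. every proper subalgebra has at most one element). A unary term $e$ of $\mathbf{A}$ is a minimal idempotent if its term operation is nonconstant, satisfies $e(e(x))=e(x)$, and its range is minimal (under inclusion) among the ranges of nonconstant idempotent unary term operations of $\mathbf{A}$. An algebra is term minimal if the term $x$ is a minimal idempotent, i.e. every idempotent unary term operation is either constant or the identity. The localization $e(\mathbf{A})$ is the algebra with universe $e(A)$ whose fundamental operations are the restrictions to $e(A)$ of the term operations $e(t(x_1,\dots,x_n))$, one for each term $t$ of $\mathbf{A}$. The term $e$ separates $\mathbf{A}$ if for all $a\neq b$ in $A$ there is a unary term $g$ with $e(g(a))\neq e(g(b))$; $e$ is dense for $\mathbf{A}$ if $\mathbf{A}$ is generated by $e(A)$. *)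

(* Defs.v *)
From HB Require Import structures.
From mathcomp Require Import all_boot.

Set Implicit Arguments.
Unset Strict Implicit.
Unset Printing Implicit Defensive.

Inductive term (S : Type) (ar : S -> nat) (V : Type) : Type :=
| Var : V -> term ar V
| App : forall s : S, ('I_(ar s) -> term ar V) -> term ar V.

Record algebra := Algebra {
  carrier :> finType;
  symb : Type;
  arity : symb -> nat;
  op : forall s : symb, ('I_(arity s) -> carrier) -> carrier }.

Fixpoint eval (A : algebra) (V : Type) (env : V -> A)
  (t : term (@arity A) V) {struct t} : A :=
  match t with
  | Var v => env v
  | App s args => @op A s (fun i => eval env (args i))
  end.

Definition uterm (A : algebra) := term (@arity A) unit.
Definition tfun (A : algebra) (t : uterm A) : A -> A :=
  fun x => eval (fun _ => x) t.

Definition nonconstant (T : eqType) (f : T -> T) := exists x y, f x != f y.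
Definition idem_fun (T : Type) (f : T -> T) := forall x, f (f x) = f x.
Definition frange (T : finType) (f : T -> T) : {set T} := [set f x | x : T].

Definition minimal_idempotent (A : algebra) (e : uterm A) :=
  [/\ nonconstant (tfun e), idem_fun (tfun e) &
    forall t : uterm A, nonconstant (tfun t) -> idem_fun (tfun t) ->
      frange (tfun t) \subset frange (tfun e) -> frange (tfun t) = frange (tfun e)].

Definition term_minimal (A : algebra) := minimal_idempotent (@Var (symb A) (@arity A) unit tt).

Definition congruence (A : algebra) (R : rel A) :=
  [/\ reflexive R, symmetric R, transitive R &
    forall (s : symb A) (a b : 'I_(arity s) -> A),
      (forall i, R (a i) (b i)) -> R (@op A s a) (@op A s b)].

Definition simple (A : algebra) :=
  1 < #|A| /\
  forall R : rel A, congruence R ->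
    (forall x y, R x y -> x = y) \/ (forall x y, R x y).

Definition subalgebra (A : algebra) (B : {set A}) :=
  forall (s : symb A) (a : 'I_(arity s) -> A),
    (forall i, a i \in B) -> @op A s a \in B.

(* finiteness is built into [algebra] *)
Definition strictly_simple (A : algebra) :=
  simple A /\ forall B : {set A}, subalgebra B -> B != setT -> #|B| <= 1.

Definition separates (A : algebra) (e : uterm A) :=
  forall a b : A, a != b -> exists g : uterm A, tfun e (tfun g a) != tfun e (tfun g b).

Definition dense (A : algebra) (e : uterm A) :=
  forall B : {set A}, subalgebra B -> frange (tfun e) \subset B -> B = setT.

Definition loc_carrier (A : algebra) (e : uterm A) : finType :=
  {x : A | x \in frange (tfun e)}.

Lemma loc_mem (A : algebra) (e : uterm A) (y : A) : tfun e y \in frange (tfun e).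
Proof. by apply/imsetP; exists y. Qed.

Definition loc_symb (A : algebra) := {n : nat & term (@arity A) 'I_n}.
Definition loc_arity (A : algebra) (s : loc_symb A) : nat := projT1 s.

Definition loc_op (A : algebra) (e : uterm A) (s : loc_symb A)
  (args : 'I_(loc_arity s) -> loc_carrier e) : loc_carrier e :=
  exist _ (tfun e (eval (fun i => val (args i)) (projT2 s))) (loc_mem e _).

Definition localization (A : algebra) (e : uterm A) : algebra :=
  @Algebra (loc_carrier e) (loc_symb A) (@loc_arity A) (@loc_op A e).

(* Main.v *)
Require Import Defs.
From mathcomp Require Import all_boot.
From Stdlib Require Import Classical ClassicalEpsilon FunctionalExtensionality.

Set Implicit Arguments.
Unset Strict Implicit.
Unset Printing Implicit Defensive.

Definition tob (P : Prop) : bool := if excluded_middle_informative P then true else false.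
Lemma tobP P : reflect P (tob P).
Proof. rewrite /tob; case: excluded_middle_informative => h; by constructor. Qed.

Fixpoint subst S (ar : S -> nat) V W (t : term ar V) (sg : V -> term ar W) : term ar W :=
  match t with Var v => sg v | @App _ _ _ s args => App (s:=s) (fun i => subst (args i) sg) end.

Lemma eval_subst (A : algebra) V W (env : W -> A) (t : term (@arity A) V) sg :
  eval env (subst t sg) = eval (fun v => eval env (sg v)) t.
Proof.
elim: t => [v|s args IH] //=. congr (@op A s _); apply: functional_extensionality => i; exact: IH.
Qed.

Definition compat (A : algebra) (S : A -> A -> Prop) :=
  forall s (a b : 'I_(arity s) -> A), (forall i, S (a i) (b i)) -> S (@op A s a) (@op A s b).

Lemma clos_lemma (A : algebra) (S P : A -> A -> Prop) : simple A -> (forall x, S x x) ->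
  compat S -> (forall x y, S x y -> P x y) -> (forall x, P x x) ->
  (forall x y, P x y -> P y x) -> (forall x y z, P x y -> P y z -> P x z) ->
  (forall x y, S x y -> x = y) \/ (forall x y, P x y).
Proof.
move=> [_ simA] Sr Sc SP Pr Ps Pt.
pose base := fun x y => tob (S x y) || tob (S y x).
have bsym : symmetric base by move=> x y; rewrite /base orbC.
pose Rc := connect base.
have Rmap : forall f : A -> A, (forall x y, S x y -> S (f x) (f y)) ->
    forall x y, Rc x y -> Rc (f x) (f y).
  move=> f fS x y /connectP [p pth ->]; elim: p x pth => [|z p IH] x /=.
    by move=> _; exact: connect0.
  move/andP=> [hxz pth]; apply: connect_trans (IH z pth); apply: connect1.
  by move: hxz; rewrite /base => /orP [/tobP h|/tobP h]; apply/orP; [left|right]; apply/tobP; apply: fS.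
have cong : congruence Rc.
  split.
  - move=> x; exact: connect0.
  - exact: sym_connect_sym.
  - move=> y x z; exact: connect_trans.
  move=> s a b hab.
  have step : forall k, k <= arity s -> Rc (@op A s a) (@op A s (fun i => if i < k then b i else a i)).
    elim=> [|k IH] hk.
      have -> : (fun i : 'I_(arity s) => if i < 0 then b i else a i) = a.
        by apply: functional_extensionality.
      exact: connect0.
    apply: connect_trans (IH (ltnW hk)) _.
    pose j := Ordinal hk.
    pose c := fun i : 'I_(arity s) => if i < k then b i else a i.
    pose f := fun x => @op A s (fun i => if i == j then x else c i).
    have fS : forall x y, S x y -> S (f x) (f y).
      move=> x y hxy; apply: Sc => i; case: (i == j) => //.
    have := Rmap f fS _ _ (hab j).
    have -> : f (a j) = @op A s c.
      rewrite /f; congr (@op A s _); apply: functional_extensionality => i.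
      case: eqP => [->|//]; by rewrite /c /= ltnn.
    have -> : f (b j) = @op A s (fun i => if i < k.+1 then b i else a i).
      rewrite /f; congr (@op A s _); apply: functional_extensionality => i.
      rewrite /c; case: eqP => [->|/eqP ne]; first by rewrite /= ltnS leqnn.
      rewrite [X in _ = (if X then _ else _)]ltnS [X in _ = (if X then _ else _)]leq_eqVlt.
      by have -> : (nat_of_ord i == k) = false by apply/negbTE; apply: contra ne => /eqP h; apply/eqP/val_inj.
    move=> h; exact: h.
  have := step _ (leqnn (arity s)).
  have -> : (fun i : 'I_(arity s) => if i < arity s then b i else a i) = b.
    by apply: functional_extensionality => i; rewrite ltn_ord.
  done.
case: (simA Rc cong) => h; [left|right].
  move=> x y hxy; apply: h; apply: connect1; by rewrite /base; apply/orP; left; apply/tobP.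
move=> x y; move: (h x y) => /connectP [p pth ->]; elim: p x pth => [|z p IH] x /=.
  by move=> _; exact: Pr.
move/andP=> [hxz pth]; apply: Pt (IH z pth).
by move: hxz; rewrite /base => /orP [/tobP h'|/tobP h']; [apply: SP|apply: Ps; apply: SP].
Qed.

Definition comp (A : algebra) (f g : uterm A) : uterm A := subst f (fun _ => g).
Lemma tfun_comp (A : algebra) (f g : uterm A) x : tfun (comp f g) x = tfun f (tfun g x).
Proof. by rewrite /tfun /comp eval_subst. Qed.

Lemma tfun_App (A : algebra) s (gs : 'I_(arity s) -> uterm A) x :
  tfun (App (s:=s) gs) x = @op A s (fun i => tfun (gs i) x).
Proof. by []. Qed.

Lemma big_sub (A : algebra) (B : {set A}) x y : strictly_simple A -> subalgebra B ->
  x \in B -> y \in B -> x != y -> B = setT.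
Proof.
move=> hA sB hx hy nxy; case: (eqVneq B setT) => // nB.
have /card_le1_eqP h := hA.2 B sB nB.
by move: nxy; rewrite (h x y hx hy) eqxx.
Qed.

Lemma e_two (A : algebra) (e : uterm A) : minimal_idempotent e ->
  exists x y, tfun e x != tfun e y.
Proof. by case. Qed.

Lemma dense_e (A : algebra) (e : uterm A) : strictly_simple A -> minimal_idempotent e -> dense e.
Proof.
move=> hA he B sB sub; have [x [y nxy]] := e_two he.
by apply: (big_sub hA sB _ _ nxy); apply: (subsetP sub); apply/imsetP; eexists.
Qed.

Lemma sep_aux (A : algebra) (e : uterm A) (a b : A) : strictly_simple A -> minimal_idempotent e ->
  (forall g, tfun e (tfun g a) = tfun e (tfun g b)) -> (forall x, exists g, tfun g a = x) -> a = b.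
Proof.
move=> hA he H Hgen.
pose B := [set x | tob (exists g, tfun g a = x /\ tfun g b = x)].
have sB : subalgebra B.
  move=> s args hargs.
  have : forall i, exists g, tfun g a = args i /\ tfun g b = args i.
    by move=> i; move: (hargs i); rewrite inE => /tobP.
  case/fin_all_exists => gs hgs; rewrite inE; apply/tobP; exists (App (s:=s) gs).
  rewrite !tfun_App; split; congr (@op A s _); apply: functional_extensionality => i; by case: (hgs i).
have BT : B = setT.
  apply: (dense_e hA he sB); apply/subsetP => x /imsetP [y _ ->].
  have [h hh] := Hgen y; rewrite inE; apply/tobP; exists (comp e h).
  by rewrite !tfun_comp -(H h) hh.
pose S := fun x y => exists g, tfun g a = x /\ tfun g b = y.
have := @clos_lemma A S (fun x y => tfun e x = tfun e y) hA.1.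
case.
- move=> x; have : x \in B by rewrite BT inE.
  by rewrite inE => /tobP [g [h1 h2]]; exists g.
- move=> s a1 b1 hab.
  case/fin_all_exists: hab => gs hgs; exists (App (s:=s) gs).
  rewrite !tfun_App; split; congr (@op A s _); apply: functional_extensionality => i; by case: (hgs i).
- by move=> x y [g [<- <-]]; exact: H.
- by [].
- by move=> x y ->.
- by move=> x y z -> ->.
- move=> h; apply: h; by exists (Var (@arity A) tt).
- move=> h; have [x [y nxy]] := e_two he; by rewrite (h x y) eqxx in nxy.
Qed.

Lemma sep_e (A : algebra) (e : uterm A) : strictly_simple A -> minimal_idempotent e -> separates e.
Proof.
move=> hA he a b nab.
case: (classic (exists g, tfun e (tfun g a) != tfun e (tfun g b))) => [//|nex]; exfalso.
have H : forall g, tfun e (tfun g a) = tfun e (tfun g b).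
  move=> g; apply/eqP; apply/negPn/negP => ne; apply: nex; by exists g.
have Gsub : forall c : A, subalgebra [set x | tob (exists g, tfun g c = x)].
  move=> c s args hargs.
  have : forall i, exists g, tfun g c = args i by move=> i; move: (hargs i); rewrite inE => /tobP.
  case/fin_all_exists => gs hgs; rewrite inE; apply/tobP; exists (App (s:=s) gs).
  rewrite !tfun_App; congr (@op A s _); apply: functional_extensionality => i; exact: hgs.
have Gc : forall c : A, [set x | tob (exists g, tfun g c = x)] = setT \/ forall g, tfun g c = c.
  move=> c; case: (eqVneq [set x | tob (exists g, tfun g c = x)] setT) => [->|nG]; [by left|right].
  have /card_le1_eqP h := hA.2 _ (Gsub c) nG => g.
  apply: h; rewrite inE; apply/tobP.
    by exists (Var (@arity A) tt).
  by exists g.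
have gen : forall c : A, [set x | tob (exists g, tfun g c = x)] = setT -> forall x, exists g, tfun g c = x.
  move=> c hc x; have : x \in [set x | tob (exists g, tfun g c = x)] by rewrite hc inE.
  by rewrite inE => /tobP.
case: (Gc a) => [ha|ha].
  by move/eqP: nab; apply; apply: (sep_aux hA he H (gen _ ha)).
case: (Gc b) => [hb|hb].
  by move/eqP: nab; apply; apply/esym; apply: (sep_aux hA he (fun g => esym (H g)) (gen _ hb)).
move/eqP: nab; apply.
have := H (Var (@arity A) tt); rewrite /tfun /= -/(tfun e a) -/(tfun e b) (ha e) (hb e); exact.
Qed.

Definition proj (A : algebra) (e : uterm A) (x : A) : loc_carrier e :=
  exist _ (tfun e x) (loc_mem e x).

Lemma proj_val (A : algebra) (e : uterm A) : minimal_idempotent e ->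
  forall u : loc_carrier e, proj e (val u) = u.
Proof.
move=> [_ idem _] u; apply: val_inj => /=.
by case: u => x /= /imsetP [y _ ->]; exact: idem.
Qed.

Fixpoint trans (A : algebra) (e : uterm A) (t : uterm (localization e)) : uterm A :=
  match t with
  | Var _ => Var (@arity A) tt
  | @App _ _ _ s args => subst (projT2 s) (fun i => comp e (trans (args i)))
  end.

Lemma trans_spec (A : algebra) (e : uterm A) : minimal_idempotent e ->
  forall (t : uterm (localization e)) (u : loc_carrier e), val (tfun t u) = tfun e (tfun (trans t) (val u)).
Proof.
move=> he; elim => [v|s args IH] u.
  by rewrite /= -{1}(proj_val he u).
case: s args IH => n t args IH.
rewrite /tfun /= eval_subst.
congr (tfun e _); congr (eval _ t); apply: functional_extensionality => i.
exact: (etrans (IH i u) (esym (tfun_comp e (trans (args i)) (val u)))).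
Qed.

Lemma tmin (A : algebra) (e : uterm A) : minimal_idempotent e -> term_minimal (localization e).
Proof.
move=> he; have [x0 [y0 nxy]] := e_two he.
have [_ _ hmin] := he.
split.
- exists (proj e x0), (proj e y0).
  by apply: contra nxy => /eqP h; apply/eqP; exact: (congr1 val h).
- by [].
move=> t nc id _.
have -> : frange (tfun (Var (@arity (localization e)) tt)) = setT.
  by apply/setP => w; rewrite inE; apply/imsetP; exists w.
apply/setP => w; rewrite inE.
pose f := comp e (comp (trans t) e).
have fsp : forall x, tfun f x = val (tfun t (proj e x)).
  by move=> x; rewrite trans_spec // !tfun_comp.
have fid : idem_fun (tfun f) by move=> x; rewrite !fsp proj_val // id.
have fnc : nonconstant (tfun f).
  case: nc => u1 [u2 n12]; exists (val u1), (val u2).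
  rewrite !fsp !proj_val //; apply: contra n12 => /eqP h; apply/eqP; exact: val_inj.
have fsub : frange (tfun f) \subset frange (tfun e).
  apply/subsetP => y /imsetP [x _ ->]; rewrite /f tfun_comp; exact: loc_mem.
have feq := hmin f fnc fid fsub.
have : val w \in frange (tfun f) by rewrite feq (valP w).
case/imsetP => x _ hx; apply/imsetP; exists (proj e x) => //.
by apply: val_inj; rewrite hx fsp.
Qed.

Lemma ss_loc (A : algebra) (e : uterm A) : strictly_simple A -> minimal_idempotent e ->
  strictly_simple (localization e).
Proof.
move=> hA he; have [x0 [y0 nxy]] := e_two he.
have npxy : proj e x0 != proj e y0.
  by apply: contra nxy => /eqP h; apply/eqP; exact: (congr1 val h).
split; first split.
- have h2 : #|[set proj e x0; proj e y0]| = 2 by rewrite cards2 npxy.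
  by rewrite -h2; exact: max_card.
- move=> R [Rr Rs Rt Rc].
  case: (classic (forall x y, R x y -> x = y)) => [h|nh]; first by left.
  right.
  have [u [v [Ruv nuv]]] : exists u v, R u v /\ u <> v.
    apply: NNPP => hn; apply: nh => x y hxy; apply: NNPP => hne; apply: hn; by exists x, y.
  pose T : finType := option (loc_carrier e).
  pose N := #|T|.
  pose args1 := fun i : 'I_N => match enum_val i with None => u | Some w => w end.
  pose args2 := fun i : 'I_N => match enum_val i with None => v | Some w => w end.
  pose env1 := fun i => val (args1 i).
  pose env2 := fun i => val (args2 i).
  pose S := fun x y => exists t : term (@arity A) 'I_N, eval env1 t = x /\ eval env2 t = y.
  pose D := [set x | tob (exists t : term (@arity A) 'I_N, eval env1 t = x /\ eval env2 t = x)].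
  have sD : subalgebra D.
    move=> s args hargs.
    have : forall i, exists t : term (@arity A) 'I_N, eval env1 t = args i /\ eval env2 t = args i.
      by move=> i; move: (hargs i); rewrite inE => /tobP.
    case/fin_all_exists => gs hgs; rewrite inE; apply/tobP; exists (App (s:=s) gs).
    rewrite /=; split; congr (@op A s _); apply: functional_extensionality => i; by case: (hgs i).
  have DT : D = setT.
    apply: (dense_e hA he sD); apply/subsetP => x hx.
    pose w : loc_carrier e := exist _ x hx.
    rewrite inE; apply/tobP; exists (Var (@arity A) (enum_rank (Some w))).
    by rewrite /= /env1 /env2 /args1 /args2 enum_rankK.
  have := @clos_lemma A S (fun x y => R (proj e x) (proj e y)) hA.1.
  case.
  + move=> x; have : x \in D by rewrite DT inE.
    by rewrite inE => /tobP [t [h1 h2]]; exists t.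
  + move=> s a1 b1 hab.
    case/fin_all_exists: hab => gs hgs; exists (App (s:=s) gs).
    rewrite /=; split; congr (@op A s _); apply: functional_extensionality => i; by case: (hgs i).
  + move=> x y [t [<- <-]].
    have hR : forall i, R (args1 i) (args2 i).
      by move=> i; rewrite /args1 /args2; case: (enum_val i) => [w|] //.
    exact: (Rc (existT (fun n => term (@arity A) 'I_n) N t) args1 args2 hR).
  + by move=> x.
  + by move=> x y; rewrite Rs.
  + move=> x y z; exact: Rt.
  + move=> h; exfalso; apply: nuv; apply: val_inj.
    apply: h; exists (Var (@arity A) (enum_rank None)).
    by rewrite /= /env1 /env2 /args1 /args2 enum_rankK.
  + move=> h x y; rewrite -(proj_val he x) -(proj_val he y); exact: h.
- move=> B sB nB; rewrite leqNgt; apply/negP => /card_gt1P [b1 [b2 [hb1 hb2 n12]]].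
  pose T : finType := {w : loc_carrier e | w \in B}.
  pose N := #|T|.
  pose args := fun i : 'I_N => val (enum_val i).
  pose env := fun i => val (args i).
  pose B' := [set x | tob (exists t : term (@arity A) 'I_N, eval env t = x)].
  have sB' : subalgebra B'.
    move=> s a ha.
    have : forall i, exists t : term (@arity A) 'I_N, eval env t = a i.
      by move=> i; move: (ha i); rewrite inE => /tobP.
    case/fin_all_exists => gs hgs; rewrite inE; apply/tobP; exists (App (s:=s) gs).
    rewrite /=; congr (@op A s _); apply: functional_extensionality => i; exact: hgs.
  have inB' : forall b (hb : b \in B), val b \in B'.
    move=> b hb; rewrite inE; apply/tobP.
    exists (Var (@arity A) (enum_rank (exist (fun w => w \in B) b hb))).
    by rewrite /= /env /args enum_rankK.
  have B'T : B' = setT.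
    apply: (big_sub hA sB' (inB' _ hb1) (inB' _ hb2)).
    by apply: contra n12 => /eqP h; apply/eqP; exact: val_inj.
  apply: (negP nB); apply/eqP/setP => w; rewrite inE.
  have : val w \in B' by rewrite B'T inE.
  rewrite inE => /tobP [t ht].
  have hin : forall i, args i \in B by move=> i; exact: (valP (enum_val i)).
  have := sB (existT (fun n => term (@arity A) 'I_n) N t) args hin.
  change (proj e (eval env t) \in B -> w \in B).
  by rewrite ht proj_val.
Qed.

Theorem mainTheorem6 (A : algebra) (e : uterm A) :
  strictly_simple A -> minimal_idempotent e ->
  [/\ separates e, dense e,
      term_minimal (localization e) & strictly_simple (localization e)].
Proof.
move=> hA he; split.
- exact: sep_e.
- exact: dense_e.
- exact: tmin.
- exact: ss_loc.
Qed.
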